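(* Let $A$ be a ring, $\varpi\in A$ a non-zero-divisor, and $H\in A$ an element whose image in $A/\varpi$ is a non-zero-divisor. Endow $A$ with the $\varpi$-adic topology and let $A\langle X\rangle$ be the ring of restricted power series. Then the map $$\varphi:A\langle X\rangle/(XH-\varpi)\to A\langle X\rangle/(XH-1),\qquad X\mapsto\varpi X,$$ is injective.
   Context: $A\langle X\rangle=\{\sum_{n\ge0}a_nX^n: a_n\in A,\ \text{for every }k\text{ one has }a_n\in\varpi^kA\text{ for all sufficiently large }n\}$. *)

(* Defs.v *)
From HB Require Import structures.
From mathcomp Require Import all_boot all_order all_algebra.
Set Implicit Arguments. Unset Strict Implicit. Unset Printing Implicit Defensive.
Import GRing.Theory.
Local Open Scope ring_scope.

(* Formal power series over A, as coefficient sequences: f n = coefficient of X^n. *)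
Definition pseries (A : comPzRingType) := nat -> A.

Definition restricted (A : comPzRingType) (w : A) (f : pseries A) : Prop :=
  forall k : nat, exists N : nat, forall n : nat, (N <= n)%N ->
    exists b : A, f n = w ^+ k * b.

Definition psmul (A : comPzRingType) (f g : pseries A) : pseries A :=
  fun n => \sum_(i < n.+1) f i * g (n - i)%N.

Definition pssub (A : comPzRingType) (f g : pseries A) : pseries A :=
  fun n => f n - g n.

Definition XH_minus (A : comPzRingType) (H c : A) : pseries A :=
  fun n => if n == 0%N then - c else if n == 1%N then H else 0.

Definition in_ideal1 (A : comPzRingType) (w : A) (p f : pseries A) : Prop :=
  exists g : pseries A, restricted w g /\ f = psmul p g.

(* Substitution X |-> c X : coefficients a_n c^n. *)
Definition subst_scale (A : comPzRingType) (c : A) (f : pseries A) : pseries A :=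
  fun n => f n * c ^+ n.

(* Main.v *)
Require Import Defs.
From HB Require Import structures.
From mathcomp Require Import all_boot all_order all_algebra.
From mathcomp Require Import ring.
From Stdlib Require Import ClassicalEpsilon FunctionalExtensionality.
Set Implicit Arguments. Unset Strict Implicit.
Import GRing.Theory.
Local Open Scope ring_scope.

Section S.
Variables (A : comPzRingType) (w H : A).
Definition D (k : nat) (x : A) := exists b, x = w ^+ k * b.

Lemma D0 k : D k 0. Proof. by exists 0; rewrite mulr0. Qed.
Lemma DD k x y : D k x -> D k y -> D k (x + y).
Proof. by move=> [b ->] [c ->]; exists (b + c); rewrite mulrDr. Qed.
Lemma DN k x : D k x -> D k (- x).
Proof. by move=> [b ->]; exists (- b); rewrite mulrN. Qed.
Lemma DM k x y : D k x -> D k (y * x).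
Proof. by move=> [b ->]; exists (y * b); ring. Qed.
Lemma Dw k j x : (k <= j)%N -> D k (w ^+ j * x).
Proof. move=> le; exists (w ^+ (j - k) * x); rewrite mulrA -exprD subnKC //. Qed.

Hypothesis hw : forall a : A, w * a = 0 -> a = 0.
Hypothesis hH : forall a : A, (exists b : A, H * a = w * b) -> exists c : A, a = w * c.

Lemma L1 k a : D k (H * a) -> D k a.
Proof.
elim: k a => [|k IH] a.
  by move=> _; exists a; rewrite expr0 mul1r.
move=> [b hb].
have [c hc] : exists c, a = w * c.
  by apply: hH; exists (w ^+ k * b); rewrite hb exprS mulrA.
have : H * c = w ^+ k * b.
  apply/eqP; rewrite -subr_eq0; apply/eqP; apply: hw.
  rewrite mulrBr; apply/eqP; rewrite subr_eq0; apply/eqP.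
  by rewrite mulrCA -hc hb exprS mulrA.
move=> e; have [c' hc'] : D k c by apply: IH; exists b.
by exists c'; rewrite hc hc' exprS mulrA.
Qed.

Lemma L2 k m a : D k (H ^+ m * a) -> D k a.
Proof.
elim: m => [|m IH]; first by rewrite expr0 mul1r.
by move=> h; apply: IH; apply: L1; rewrite mulrA -exprS.
Qed.

Lemma Dcancel k x y : w ^+ k * x = w ^+ k * y -> x = y.
Proof.
elim: k => [|k IH]; first by rewrite !expr0 !mul1r.
rewrite !exprS -!mulrA => e; apply: IH.
apply/eqP; rewrite -subr_eq0; apply/eqP; apply: hw.
by rewrite mulrBr e subrr.
Qed.

Lemma psmulXH0 (c : A) g : psmul (XH_minus H c) g 0 = - c * g 0%N.
Proof. by rewrite /psmul big_ord_recl big_ord0 addr0 /XH_minus /=. Qed.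

Lemma psmulXHS (c : A) g m :
  psmul (XH_minus H c) g m.+1 = - c * g m.+1 + H * g m.
Proof.
rewrite /psmul big_ord_recl big_ord_recl big1 ?addr0.
  by rewrite /XH_minus /= subn1 /=.
by move=> i _; rewrite /XH_minus /= mul0r.
Qed.
End S.

Theorem mainTheorem17 (A : comPzRingType) (w H : A)
  (hw : forall a : A, w * a = 0 -> a = 0)
  (hH : forall a : A, (exists b : A, H * a = w * b) -> exists c : A, a = w * c)
  (f1 f2 : pseries A) (hf1 : restricted w f1) (hf2 : restricted w f2) :
  in_ideal1 w (XH_minus H 1) (pssub (subst_scale w f1) (subst_scale w f2)) ->
  in_ideal1 w (XH_minus H w) (pssub f1 f2).
Proof.
move=> [g [hg eg]].
set a := pssub f1 f2.
have ha : restricted w a.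
  move=> k; have [N1 h1] := hf1 k; have [N2 h2] := hf2 k.
  exists (maxn N1 N2) => n hn.
  have [b1 e1] := h1 n (leq_trans (leq_maxl _ _) hn).
  have [b2 e2] := h2 n (leq_trans (leq_maxr _ _) hn).
  by exists (b1 - b2); rewrite /a /pssub e1 e2 mulrBr.
have R0 : a 0%N = - g 0%N.
  have := congr1 (fun F => F 0%N) eg; rewrite psmulXH0 /pssub /subst_scale /=.
  by rewrite !expr0 !mulr1 mulN1r.
have RS m : a m.+1 * w ^+ m.+1 = - g m.+1 + H * g m.
  have := congr1 (fun F => F m.+1) eg; rewrite psmulXHS /pssub /subst_scale /=.
  by rewrite mulN1r mulrBl.
have Hdiv n : D w n.+1 (g n).
  have [N hN] := hg n.+1.
  suff: forall d m, (n <= m)%N -> (N <= m + d)%N -> D w n.+1 (g m).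
    by move/(_ N n (leqnn n)); apply; rewrite leq_addl.
  elim=> [|d IH] m hm hmd.
    by apply: hN; rewrite addn0 in hmd.
  have h1 : D w n.+1 (g m.+1) by apply: IH; [exact: leqW | by rewrite addSn -addnS].
  apply: (L1 hw hH).
  have -> : H * g m = g m.+1 + a m.+1 * w ^+ m.+1 by rewrite RS; ring.
  apply: DD => //; rewrite mulrC; exact: Dw.
pose h n := proj1_sig (constructive_indefinite_description _ (Hdiv n)).
have eh n : g n = w ^+ n.+1 * h n.
  exact: (proj2_sig (constructive_indefinite_description _ (Hdiv n))).
have RH m : a m.+1 = - w * h m.+1 + H * h m.
  apply: (Dcancel hw (k := m.+1)).
  rewrite mulrC RS !eh exprS; ring.
exists h; split; last first.
  apply: functional_extensionality => n; case: n => [|m].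
    by rewrite psmulXH0 -/a R0 eh expr1 mulNr.
  by rewrite psmulXHS -/a RH.
move=> k; have [N0 hN0] := ha k.
exists N0 => n hn.
have key m : D w k (H ^+ m * h n - w ^+ m * h (n + m)%N).
  elim: m => [|m IH]; first by rewrite !expr0 !mul1r addn0 subrr; exact: D0.
  have e : H ^+ m.+1 * h n - w ^+ m.+1 * h (n + m.+1)%N =
    H * (H ^+ m * h n - w ^+ m * h (n + m)%N) + w ^+ m * a (n + m).+1.
    by rewrite RH addnS !exprS; ring.
  rewrite e; apply: DD; first exact: DM.
  apply: DM; exact: (hN0 _ (leq_trans hn (leq_trans (leq_addr m n) (leqnSn _)))).
have d1 : D w k (w ^+ k * h (n + k)%N) by exact: Dw.
have d2 := key k.
have d3 := DD d2 d1.
rewrite subrK in d3.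
exact: (L2 hw hH d3).
Qed.
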